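(* Let $v$ be a vertex of degree at least $4$ in a graph $G$, and let $va, vb$ be two distinct edges incident with $v$ where $a\ne b$. Let $G_{[v,ab]}=G-v+ab$ be the graph obtained by deleting $v$ and adding a new edge $ab$. If $G_{[v,ab]}\in\mathcal{S}_3$, then $G\in\mathcal{S}_3$.
   Context: Graphs may have parallel edges but no loops. $G\in\mathcal{S}_3$ means: for every $\beta:V(G)\to\mathbb{Z}_3$ with $\sum_v\beta(v)\equiv0\pmod3$ there is a strongly-connected orientation $D$ of $G$ with $d^+_D(v)-d^-_D(v)\equiv\beta(v)\pmod3$ for all $v$. *)

(* Defs.v *)
(* Multigraphs (parallel edges allowed, no loops) given by
   a finite vertex type V, a finite edge type E, and endpoint maps. *)
From HB Require Import structures.
From mathcomp Require Import all_boot all_order all_algebra.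
Set Implicit Arguments. Unset Strict Implicit. Unset Printing Implicit Defensive.
Import GRing.Theory.
Local Open Scope ring_scope.

Section Graphs.
Variables (V E : finType) (src tgt : E -> V).

Definition loopless := forall e, src e != tgt e.

Definition otail (D : E -> bool) e := if D e then src e else tgt e.
Definition ohead (D : E -> bool) e := if D e then tgt e else src e.

Definition arc (D : E -> bool) : rel V :=
  [rel x y | [exists e, (otail D e == x) && (ohead D e == y)]].

Definition strongly_connected (D : E -> bool) :=
  forall x y : V, connect (arc D) x y.

Definition outdeg (D : E -> bool) (x : V) := #|[set e | otail D e == x]|.
Definition indeg (D : E -> bool) (x : V) := #|[set e | ohead D e == x]|.

Definition S3 :=
  forall beta : V -> 'Z_3, \sum_(x : V) beta x = 0 ->
    exists D : E -> bool, strongly_connected D /\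
      forall x, (outdeg D x)%:R - (indeg D x)%:R = beta x.

Definition degree (x : V) := #|[set e | (src e == x) || (tgt e == x)]|.

Definition joins (e : E) (x y : V) :=
  ((src e == x) && (tgt e == y)) || ((src e == y) && (tgt e == x)).
End Graphs.

(* The graph G - v + ab : vertices V \ {v}; edges = edges of G not incident
   with v, plus one new edge (None) joining a and b. *)
Definition sV (V : finType) (v : V) := {x : V | x != v}.
Definition sE (V E : finType) (src tgt : E -> V) (v : V) :=
  option {e : E | (src e != v) && (tgt e != v)}.

(* the default (a) of insubd is never used, since the endpoints differ from v *)
Definition ssrc (V E : finType) (src tgt : E -> V) (v a b : V)
  (hav : a != v) (hbv : b != v) (e : sE src tgt v) : sV v :=
  match e with
  | Some e' => insubd (exist _ a hav : sV v) (src (val e'))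
  | None => exist _ a hav end.
Definition stgt (V E : finType) (src tgt : E -> V) (v a b : V)
  (hav : a != v) (hbv : b != v) (e : sE src tgt v) : sV v :=
  match e with
  | Some e' => insubd (exist _ a hav : sV v) (tgt (val e'))
  | None => exist _ b hbv end.
Arguments ssrc : clear implicits.
Arguments stgt : clear implicits.

(* Main.v *)
Require Import Defs.
From mathcomp Require Import all_boot all_order all_algebra zify ring.
Set Implicit Arguments. Unset Strict Implicit. Unset Printing Implicit Defensive.
Import GRing.Theory.
Local Open Scope ring_scope.

Lemma sum_sig (I : finType) (P : pred I) (F : I -> 'Z_3) :
  \sum_(i | P i) F i = \sum_(x : {x | P x}) F (val x).
Proof.
rewrite (reindex_omap (val : {x | P x} -> I) insub); last first.
  by move=> i Pi; rewrite insubT.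
by apply: eq_bigl=> -[i iA]/=; rewrite insubT ?iA /= eqxx.
Qed.

Lemma sum_opt (T : finType) (F : option T -> 'Z_3) :
  \sum_(o : option T) F o = F None + \sum_(t : T) F (Some t).
Proof.
rewrite (bigD1 None) //=; congr (_ + _).
rewrite (reindex_omap (Some : T -> option T) id); last by case.
by apply: eq_bigl => t; rewrite eqxx.
Qed.

Definition fl (V E : finType) (src tgt : E -> V) (D : E -> bool) e x : 'Z_3 :=
  (otail src tgt D e == x)%:R - (Defs.ohead src tgt D e == x)%:R.

Lemma bnd (V E : finType) (src tgt : E -> V) D x :
  (outdeg src tgt D x)%:R - (indeg src tgt D x)%:R = \sum_e fl src tgt D e x :> 'Z_3.
Proof.
rewrite /outdeg /indeg /fl sumrB -!sum1_card !natr_sum !big_mkcond /=.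
rewrite big_mkcond /=.
congr (_ - _); last rewrite big_mkcond /=;
  by apply: eq_bigr => e _; rewrite inE; case: (_ == x).
Qed.

Lemma sum_eq1 (V : finType) (y : V) : \sum_x ((y == x)%:R : 'Z_3) = 1.
Proof.
rewrite (bigD1 y) //= eqxx big1 ?addr0 // => x /negbTE.
by rewrite eq_sym => ->.
Qed.

Lemma fl_sum (V E : finType) (src tgt : E -> V) D e :
  \sum_x fl src tgt D e x = 0.
Proof. by rewrite /fl sumrB !sum_eq1 subrr. Qed.

Lemma z3 (z : 'Z_3) : exists s1 s2 : bool,
  z = (if s1 then 1 else -1) + (if s2 then 1 else -1).
Proof.
case: z => [[|[|[|]]]] // H.
- by exists true, false; apply/val_inj.
- by exists false, false; apply/val_inj.
- by exists true, true; apply/val_inj.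
Qed.

Local Close Scope ring_scope.
Theorem mainTheorem9 (V E : finType) (src tgt : E -> V)
  (hloop : loopless src tgt) (v a b : V) (ea eb : E)
  (hdeg : 4 <= degree src tgt v) (hab : a != b) (heab : ea != eb)
  (hea : joins src tgt ea v a) (heb : joins src tgt eb v b)
  (hav : a != v) (hbv : b != v) :
  S3 (ssrc V E src tgt v a b hav hbv) (stgt V E src tgt v a b hav hbv) ->
  S3 src tgt.
Proof.
Local Open Scope ring_scope.
move=> HS beta Hsum.
pose inc := fun e => (src e == v) || (tgt e == v).
pose F := [set e | inc e && (e != ea) && (e != eb)].
have incea : inc ea.
  by rewrite /inc; case/orP: hea => /andP[/eqP-> /eqP->]; rewrite ?eqxx ?orbT.
have inceb : inc eb.
  by rewrite /inc; case/orP: heb => /andP[/eqP-> /eqP->]; rewrite ?eqxx ?orbT.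
have cardF : (2 <= #|F|)%N.
  pose I := [set e | inc e].
  have -> : F = (I :\ ea) :\ eb.
    by apply/setP => e; rewrite !inE; case: (inc e); case: (e != ea); case: (e != eb).
  have h1 := cardsD1 ea I; have h2 := cardsD1 eb (I :\ ea).
  rewrite !inE incea inceb eq_sym heab /= in h1 h2.
  move: hdeg; rewrite /degree -/I => h.
  have : #|I| = #|[set e | (src e == v) || (tgt e == v)]| by [].
  lia.
have incF : forall e, e \in F -> inc e by move=> e; rewrite inE => /andP[/andP[]].
have [f1 f1F] : exists f1, f1 \in F by apply/card_gt0P; lia.
have [f2 f2F] : exists f2, f2 \in F :\ f1.
  apply/card_gt0P; have := cardsD1 f1 F; rewrite f1F; lia.
move: f2F; rewrite in_setD1 => /andP[f21 f2F].
pose R := \sum_(e | (e \in F) && (e != f1) && (e != f2)) (1 : 'Z_3).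
have [s1 [s2 Hs]] := z3 (beta v - R).
pose s := fun e => if e == f1 then s1 else if e == f2 then s2 else true.
pose g := fun e => s e == (src e == v).
have flg : forall e, inc e -> fl src tgt g e v = (if s e then 1 else -1).
  move=> e Hi; have hl := hloop e; rewrite /fl /otail /Defs.ohead /g.
  case hs: (src e == v).
    have ht : (tgt e == v) = false by apply/negbTE; rewrite -(eqP hs) eq_sym.
    by case: (s e) => /=; rewrite ?hs ?ht /= ?subr0 ?sub0r.
  have ht : (tgt e == v) by rewrite /inc hs in Hi.
  by case: (s e) => /=; rewrite ?hs ?ht /= ?subr0 ?sub0r.
have HF : \sum_(e in F) fl src tgt g e v = beta v.
  rewrite (bigD1 f1) //= (bigD1 f2) /=; last by rewrite f2F f21.
  rewrite !flg ?incF //.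
  rewrite (eq_bigr (fun _ => 1)); last first.
    move=> e /andP[/andP[eF e1] e2].
    by rewrite flg ?incF // /s (negbTE e1) (negbTE e2).
  by rewrite -/R /s eqxx (negbTE f21) eqxx addrA -Hs subrK.
pose beta' := fun x' : sV v => beta (val x') - \sum_(e in F) fl src tgt g e (val x').
have Hsum' : \sum_x' beta' x' = 0.
  rewrite sumrB -(sum_sig (fun x => x != v) beta)
    -(sum_sig (fun x => x != v) (fun x => \sum_(e in F) fl src tgt g e x)).
  have h1 : \sum_(x | x != v) beta x = - beta v.
    by move: Hsum; rewrite (bigD1 v) //= => /eqP; rewrite addrC addr_eq0 => /eqP.
  have h2 : \sum_(x | x != v) \sum_(e in F) fl src tgt g e x = - beta v.
    rewrite exchange_big /= -HF -sumrN; apply: eq_bigr => e _.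
    have := fl_sum src tgt g e; rewrite (bigD1 v) //= => /eqP.
    by rewrite addrC addr_eq0 => /eqP.
  by rewrite h1 h2 subrr.
have [D' [Hsc' Hb']] := HS beta' Hsum'.
pose P := fun e : E => (src e != v) && (tgt e != v).
pose D := fun e : E => if e == ea then D' None == (src ea == a)
  else if e == eb then D' None == (tgt eb == b)
  else if (insub e : option {e0 | P e0}) is Some e' then D' (Some e') else g e.
have hba : eb != ea by rewrite eq_sym.
have Hta : otail src tgt D ea = if D' None then a else v.
  rewrite /otail /D eqxx.
  case/orP: hea => /andP[/eqP h1 /eqP h2]; rewrite h1 h2 ?eqxx;
    first rewrite (eq_sym v a) (negbTE hav); by case: (D' None).
have Hha : Defs.ohead src tgt D ea = if D' None then v else a.
  rewrite /Defs.ohead /D eqxx.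
  case/orP: hea => /andP[/eqP h1 /eqP h2]; rewrite h1 h2 ?eqxx;
    first rewrite (eq_sym v a) (negbTE hav); by case: (D' None).
have Htb : otail src tgt D eb = if D' None then v else b.
  rewrite /otail /D eqxx (negbTE hba).
  case/orP: heb => /andP[/eqP h1 /eqP h2]; rewrite h1 h2 ?eqxx;
    last rewrite (eq_sym v b) (negbTE hbv); by case: (D' None).
have Hhb : Defs.ohead src tgt D eb = if D' None then b else v.
  rewrite /Defs.ohead /D eqxx (negbTE hba).
  case/orP: heb => /andP[/eqP h1 /eqP h2]; rewrite h1 h2 ?eqxx;
    last rewrite (eq_sym v b) (negbTE hbv); by case: (D' None).
have HDg : forall e, inc e -> e != ea -> e != eb -> D e = g e.
  move=> e ie e1 e2; rewrite /D (negbTE e1) (negbTE e2) insubN //.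
  by rewrite /P negb_and !negbK.
have HDs : forall u : {e0 | P e0}, D (val u) = D' (Some u).
  move=> u; case/andP: (valP u) => h1 h2.
  have ne : forall e, inc e -> val u != e.
    by move=> e; apply: contraTneq => <-; rewrite /inc (negbTE h1) (negbTE h2).
  by rewrite /D (negbTE (ne _ incea)) (negbTE (ne _ inceb)) valK.
pose ss := ssrc V E src tgt v a b hav hbv.
pose st := stgt V E src tgt v a b hav hbv.
have Hvt : forall u, val (otail ss st D' (Some u)) = otail src tgt D (val u).
  move=> u; rewrite /otail HDs /=; case/andP: (valP u) => h1 h2.
  by case: (D' (Some u)); rewrite val_insubd ?h1 ?h2.
have Hvh : forall u, val (Defs.ohead ss st D' (Some u)) = Defs.ohead src tgt D (val u).
  move=> u; rewrite /Defs.ohead HDs /=; case/andP: (valP u) => h1 h2.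
  by case: (D' (Some u)); rewrite val_insubd ?h1 ?h2.
exists D; split.
  have lift1 : forall x' y', Defs.arc ss st D' x' y' ->
      connect (Defs.arc src tgt D) (val x') (val y').
    move=> x' y' /existsP [[u|] /andP [/eqP <- /eqP <-]].
      by apply: connect1; apply/existsP; exists (val u); rewrite Hvt Hvh !eqxx.
    rewrite /otail /Defs.ohead /=; case hd: (D' None) => /=;
      apply: (@connect_trans _ _ v); apply: connect1; apply/existsP;
      by [exists ea; rewrite Hta Hha hd !eqxx | exists eb; rewrite Htb Hhb hd !eqxx].
  have liftc : forall x' y', connect (Defs.arc ss st D') x' y' ->
      connect (Defs.arc src tgt D) (val x') (val y').
    move=> x' y' /connectP [p pth ->]; elim: p x' pth => [|z p IH] x' /=.
      by move=> _; apply: connect0.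
    by case/andP => h1 h2; apply: connect_trans (lift1 _ _ h1) (IH _ h2).
  have toS : forall x, exists x' : sV v,
      connect (Defs.arc src tgt D) x (val x') /\ connect (Defs.arc src tgt D) (val x') x.
    move=> x; case hx: (x == v); last first.
      by exists (exist _ x (negbT hx)); split; apply: connect0.
    move/eqP: hx => ->; exists (exist _ a hav) => /=.
    have hab' := liftc _ _ (Hsc' (exist _ a hav) (exist _ b hbv)).
    have hba' := liftc _ _ (Hsc' (exist _ b hbv) (exist _ a hav)).
    simpl in hab', hba'.
    case hd: (D' None); split.
    - apply: (@connect_trans _ _ b) => //; apply: connect1; apply/existsP.
      by exists eb; rewrite Htb Hhb hd !eqxx.
    - by apply: connect1; apply/existsP; exists ea; rewrite Hta Hha hd !eqxx.
    - by apply: connect1; apply/existsP; exists ea; rewrite Hta Hha hd !eqxx.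
    - apply: (@connect_trans _ _ b) => //; apply: connect1; apply/existsP.
      by exists eb; rewrite Htb Hhb hd !eqxx.
  move=> x y; have [x' [hx1 hx2]] := toS x; have [y' [hy1 hy2]] := toS y.
  apply: connect_trans hx1 _; apply: connect_trans _ hy2; exact: liftc.
move=> x; rewrite bnd.
have Hsplit : forall y, \sum_e fl src tgt D e y =
   fl src tgt D ea y + fl src tgt D eb y + \sum_(e in F) fl src tgt g e y
   + \sum_(e | P e) fl src tgt D e y.
  move=> y; rewrite (bigD1 ea) //= (bigD1 eb) //= (bigID inc) /=.
  have h1 : \sum_(i | (i != ea) && (i != eb) && inc i) fl src tgt D i y
      = \sum_(e in F) fl src tgt g e y.
    apply: eq_big => [e|e /andP[/andP[e1 e2] ie]].
      by rewrite inE; case: (inc e); case: (e != ea); case: (e != eb).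
    by rewrite /fl /otail /Defs.ohead HDg.
  have h2 : \sum_(i | (i != ea) && (i != eb) && ~~ inc i) fl src tgt D i y
      = \sum_(e | P e) fl src tgt D e y.
    apply: eq_bigl => e; rewrite /inc negb_or /P.
    case hP: ((src e != v) && (tgt e != v)); rewrite ?andbF // ?andbT.
    apply/andP; split; apply/eqP => He; [move: incea | move: inceb];
      by rewrite -He /inc; case/andP: hP => /negbTE -> /negbTE ->.
  by rewrite h1 h2 !addrA.
rewrite Hsplit.
case hx: (x == v).
  move/eqP: hx => ->.
  have h0 : \sum_(e | P e) fl src tgt D e v = 0.
    apply: big1 => e /andP[h1 h2]; rewrite /fl /otail /Defs.ohead.
    by case: (D e); rewrite (negbTE h1) (negbTE h2) subrr.
  rewrite h0 addr0 HF /fl Hta Hha Htb Hhb.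
  by case: (D' None); rewrite eqxx (negbTE hav) (negbTE hbv) /=; ring.
pose x' : sV v := exist _ x (negbT hx).
have := Hb' x'; rewrite bnd sum_opt /beta' /= => Hx.
rewrite (eq_bigr (fun u => fl src tgt D (val u) x)) in Hx; last first.
  by move=> u _; rewrite /fl -Hvt -Hvh -[x]/(val x') !val_eqE.
rewrite -(sum_sig P (fun e => fl src tgt D e x)) in Hx.
have hN : fl ss st D' None x' = fl src tgt D ea x + fl src tgt D eb x.
  rewrite /fl Hta Hha Htb Hhb /otail /Defs.ohead /=.
  rewrite -[x]/(val x') -!val_eqE /=.
  have hvx : (v == x) = false by rewrite eq_sym; apply: negbTE; rewrite hx.
  by case: (D' None); rewrite /= hvx; ring.
rewrite hN in Hx.
rewrite -[beta x](subrK (\sum_(e in F) fl src tgt g e x)) -Hx; ring.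
Qed.
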